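(* Let $X$ be a real normed space, $\mathcal M=\{M_1,\dots,M_n\}\subset\mathcal P^f_{\mathrm{Cl,Conv}}(X)$, $\Sigma(\mathcal M)\neq\emptyset$ and $d=(d_1,\dots,d_n)\in\Omega(\mathcal M)$. Suppose there is an index $s$ such that every nonempty set of the form $B_r(M_s)\cap K_d$ ($0\le r<\infty$) lies in the same finiteness class as the $M_i$. Then for every $K\in\Sigma_d(\mathcal M)$ there exists $i$ with $d_i=\sup_{x\in M_i}|x\,K|$.
   Context: For a metric space $X$, $p\in X$, $A\subset X$: $|p\,A|=\inf_{a\in A}|p\,a|$ ($=\infty$ if $A=\emptyset$); for $0\le r<\infty$, $B_r(A)=\{p:|p\,A|\le r\}$. For nonempty $A,B$, $d_H(A,B)=\max\{\sup_{a\in A}|a\,B|,\sup_{b\in B}|b\,A|\}\in[0,\infty]$. $\mathcal P_{\mathrm{Cl}}(X)$ is the set of nonempty closed subsets of $X$ with $d_H$; a finiteness class is an equivalence class of $A\sim B\iff d_H(A,B)<\infty$. $\mathcal P^f_{\mathrm{Cl,Conv}}(X)$ denotes a fixed finiteness class of the space of nonempty closed convex subsets of $X$ (a family of nonempty closed convex sets pairwise at finite Hausdorff distance, maximal with this property); let $\mathcal P^f_{\mathrm{Cl}}(X)$ be the finiteness class of $\mathcal P_{\mathrm{Cl}}(X)$ containing it. For $\mathcal M=\{M_1,\dots,M_n\}$ in it, $S_{\mathcal M}(Y)=\sum_i d_H(Y,M_i)$; $\Sigma(\mathcal M)$ is the set of minimizers of $S_{\mathcal M}$ over $\mathcal P^f_{\mathrm{Cl}}(X)$;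 for $K\in\Sigma(\mathcal M)$, $d(K)=(d_H(K,M_1),\dots,d_H(K,M_n))$; $\Omega(\mathcal M)=\{d(K):K\in\Sigma(\mathcal M)\}$; for $d\in\Omega(\mathcal M)$, $\Sigma_d(\mathcal M)=\{K\in\Sigma(\mathcal M):d(K)=d\}$ and $K_d=\bigcap_{i=1}^nB_{d_i}(M_i)$. *)

(* Defs.v *)
From HB Require Import structures.
From mathcomp Require Import all_boot all_order all_algebra.
From mathcomp Require Import all_classical all_reals all_analysis.
Set Implicit Arguments. Unset Strict Implicit. Unset Printing Implicit Defensive.
Import Order.TTheory GRing.Theory Num.Theory.
Import numFieldNormedType.Exports.
Local Open Scope classical_set_scope.
Local Open Scope ring_scope.
Local Open Scope ereal_scope.

Section Defs.
Variables (R : realType) (X : normedModType R).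

(* |p A| = inf_{a in A} |p a|, = +oo when A is empty *)
Definition distp (p : X) (A : set X) : \bar R :=
  ereal_inf [set (`|p - a|)%:E | a in A].

Definition Bset (r : R) (A : set X) : set X :=
  [set p | distp p A <= r%:E].

Definition dH (A B : set X) : \bar R :=
  maxe (ereal_sup [set distp a B | a in A]) (ereal_sup [set distp b A | b in B]).

(* the finiteness class of P_Cl(X) represented by the set C *)
Definition in_classCl (C Y : set X) : Prop :=
  Y !=set0 /\ closed Y /\ dH Y C < +oo.

Definition SM (n : nat) (M : 'I_n -> set X) (Y : set X) : \bar R :=
  \sum_(i < n) dH Y (M i).

Definition SigmaM (C : set X) (n : nat) (M : 'I_n -> set X) (K : set X) : Prop :=
  in_classCl C K /\ forall Y, in_classCl C Y -> SM M K <= SM M Y.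

Definition dvec_is (n : nat) (M : 'I_n -> set X) (K : set X) (d : 'I_n -> R) : Prop :=
  forall i, dH K (M i) = (d i)%:E.

Definition OmegaM (C : set X) (n : nat) (M : 'I_n -> set X) (d : 'I_n -> R) : Prop :=
  exists K, SigmaM C M K /\ dvec_is M K d.

Definition Kd (n : nat) (M : 'I_n -> set X) (d : 'I_n -> R) : set X :=
  \bigcap_(i in [set: 'I_n]) Bset (d i) (M i).

End Defs.

(* Main.v *)
Require Import Defs.
From HB Require Import structures.
From mathcomp Require Import all_boot all_order all_algebra.
From mathcomp Require Import all_classical all_reals all_analysis.
From mathcomp Require Import ring lra.
Set Implicit Arguments. Unset Strict Implicit. Unset Printing Implicit Defensive.
Import Order.TTheory GRing.Theory Num.Theory.
Import numFieldNormedType.Exports.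
Local Open Scope classical_set_scope.
Local Open Scope ring_scope.
Local Open Scope ereal_scope.
Local Open Scope convex_scope.

Section H.
Variables (R : realType) (X : normedModType R).

Lemma distp_ge0 (p : X) A : 0 <= distp p A.
Proof. by apply: le_ereal_inf_tmp => _ [a _ <-]; rewrite lee_fin. Qed.

Lemma distp_le (p : X) A a : A a -> distp p A <= (`|p - a|)%:E.
Proof. by move=> Aa; apply: ge_ereal_inf; exists (`|p - a|)%:E => //; exists a. Qed.

Lemma distp_lt (p : X) A (r : R) : distp p A < r%:E -> exists2 a, A a & (`|p - a| < r)%R.
Proof. by move=> /ereal_inf_lt [_ [a Aa <-]]; rewrite lte_fin => h; exists a. Qed.

Lemma distp_leP (p : X) A (r : R) :
  (forall e : R, (0 < e)%R -> exists2 a, A a & (`|p - a| <= r + e)%R) -> distp p A <= r%:E.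
Proof.
move=> h; apply/lee_addgt0Pr => e e0; have [a Aa ha] := h e e0. 
apply: le_trans; first exact: (distp_le p Aa). by rewrite -EFinD lee_fin.
Qed.

Lemma distp_conv (A : set X) (p q : X) (u v : R) (t : {i01 R}) :
  convex_set (A : set (convex_lmodType X)) ->
  distp p A <= u%:E -> distp q A <= v%:E ->
  distp (t%:num *: p + (1 - t%:num) *: q)%R A <= (t%:num * u + (1 - t%:num) * v)%:E.
Proof.
move=> cA hp hq; apply: distp_leP => e e0.
have [a Aa ha] : exists2 a, A a & (`|p - a| < u + e)%R.
  by apply: distp_lt; apply: (le_lt_trans hp); rewrite lte_fin ltrDl.
have [b Ab hb] : exists2 b, A b & (`|q - b| < v + e)%R.
  by apply: distp_lt; apply: (le_lt_trans hq); rewrite lte_fin ltrDl.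
have := cA a b t; rewrite !inE => /(_ Aa Ab) Hc.
exists (t%:num *: a + (1 - t%:num) *: b)%R; first exact: Hc.
have t0 : (0 <= t%:num)%R by [].
have t1 : (0 <= 1 - t%:num)%R by rewrite subr_ge0.
rewrite (_ : (_ - _)%R = (t%:num *: (p - a) + (1 - t%:num) *: (q - b))%R); last first.
  by rewrite !scalerBr opprD addrACA.
apply: (le_trans (ler_normD _ _)); rewrite !normrZ !ger0_norm //.
have -> : (t%:num * u + (1 - t%:num) * v + e = t%:num * (u + e) + (1 - t%:num) * (v + e))%R.
  by rewrite !mulrDr addrACA -mulrDl subrKC mul1r.
by apply: lerD; apply: ler_wpM2l => //; apply: ltW.
Qed.


Lemma Bset_closed (r : R) (A : set X) : closed (Bset r A).
Proof.
move=> p hp; apply: distp_leP => e e0.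
have e20 : (0 < e / 2)%R by rewrite divr_gt0.
have [q [hq pq]] := hp _ (@nbhsx_ballx _ _ p _ e20).
move: pq; rewrite -ball_normE /= => pq.
have [a Aa ha] : exists2 a, A a & (`|q - a| < r + e / 2)%R.
  by apply: distp_lt; apply: (le_lt_trans hq); rewrite lte_fin ltrDl.
exists a => //.
rewrite (_ : (p - a = (p - q) + (q - a))%R); last by rewrite addrA subrK.
apply: (le_trans (ler_normD _ _)).
by apply: ltW; lra.
Qed.

Lemma Kd_closed n (M : 'I_n -> set X) (d : 'I_n -> R) : closed (Kd M d).
Proof. by apply: closed_bigI => i _; exact: Bset_closed. Qed.


Lemma ereal_between (x : \bar R) (y : R) : x < y%:E -> exists c : R, x < c%:E /\ (c < y)%R.
Proof.
case: x => [x| |] /=.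
- by rewrite lte_fin => h; exists ((x + y) / 2)%R; split; rewrite ?lte_fin; lra.
- by [].
- by move=> _; exists (y - 1)%R; split; [exact: ltNyr | lra].
Qed.

Lemma dH_le1 (K A : set X) k : K k -> distp k A <= dH K A.
Proof.
move=> Kk; rewrite /dH le_max; apply/orP; left.
by apply: ereal_sup_ubound; exists k.
Qed.

Lemma dH_le2 (K A : set X) : ereal_sup [set distp x K | x in A] <= dH K A.
Proof. by rewrite /dH le_max lexx orbT. Qed.

Lemma dH_leP (K A : set X) (b : R) :
  (forall k, K k -> distp k A <= b%:E) -> (forall x, A x -> distp x K <= b%:E) ->
  dH K A <= b%:E.
Proof.
move=> h1 h2; rewrite /dH ge_max; apply/andP; split; apply: ge_ereal_sup.
- by move=> _ [k Kk <-]; exact: h1.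
- by move=> _ [x Ax <-]; exact: h2.
Qed.

End H.

Theorem mainTheorem16 (R : realType) (X : normedModType R)
  (C : set X) (n : nat) (M : 'I_n -> set X) (d : 'I_n -> R) :
  (* C represents the fixed finiteness class of nonempty closed convex sets *)
  C !=set0 -> closed C -> convex_set C ->
  (* each M_i is a nonempty closed convex set in that class *)
  (forall i, M i !=set0 /\ closed (M i) /\ convex_set (M i) /\ dH (M i) C < +oo) ->
  (exists K, SigmaM C M K) ->
  OmegaM C M d ->
  (exists s : 'I_n, forall r : R, (0 <= r)%R ->
     Bset r (M s) `&` Kd M d !=set0 ->
     dH (Bset r (M s) `&` Kd M d) C < +oo) ->
  forall K, SigmaM C M K -> dvec_is M K d ->
  exists i : 'I_n, (d i)%:E = ereal_sup [set distp x K | x in M i].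
Proof.
move=> _ _ _ hM _ _ [s hs] K [[[k0 Kk0] [Kcl KC]] Kmin] dK.
have [//|hno] := pselect (exists i : 'I_n, (d i)%:E = ereal_sup [set distp x K | x in M i]).
exfalso.
pose e i := ereal_sup [set distp x K | x in M i].
have Kd_K : forall i k, K k -> distp k (M i) <= (d i)%:E.
  by move=> i k Kk; rewrite -(dK i); exact: dH_le1.
have ed : forall i, e i < (d i)%:E.
  move=> i; rewrite lt_neqAle; apply/andP; split.
    by apply/eqP => h; apply: hno; exists i; rewrite -h.
  by rewrite -(dK i); exact: dH_le2.
have e0 : forall i, 0 <= e i.
  move=> i; have [m Mm] := (hM i).1.
  apply: le_trans (distp_ge0 m K) _; apply: ereal_sup_ubound; by exists m.
have hc : forall i, exists c : R, e i < c%:E /\ (c < d i)%R.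
  by move=> i; exact: ereal_between.
pose c i := projT1 (cid (hc i)).
have ec : forall i, e i < (c i)%:E by move=> i; exact: (projT2 (cid (hc i))).1.
have cd : forall i, (c i < d i)%R by move=> i; exact: (projT2 (cid (hc i))).2.
have cs0 : (0 < c s)%R by rewrite -lte_fin; exact: le_lt_trans (e0 s) (ec s).
have ds0 : (0 < d s)%R by exact: lt_trans cs0 (cd s).
pose g := (\big[Order.min/1]_(i < n) (d i - c i))%R.
have g0 : (0 < g)%R by apply: lt_bigmin => // i _; rewrite subr_gt0.
have gle : forall i, (g <= d i - c i)%R by move=> i; exact: bigmin_le.
pose B := (2 * d s + 1)%R.
have B0 : (0 < B)%R by rewrite /B; lra.
pose t := (g / (2 * B))%R.
have gs := gle s.
have cds := cd s.
have t0 : (0 < t)%R by rewrite /t divr_gt0 // mulr_gt0.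
have tB : (t * B = g / 2)%R.
  rewrite /t; field; rewrite gt_eqF //.
have t1 : (t < 1)%R by rewrite -(ltr_pM2r B0) mul1r tB /B; lra.
pose tt : {i01 R} := Itv01 (ltW t0) (ltW t1).
have ttE : tt%:num = t by [].
pose r := (t * c s + (1 - t) * d s)%R.
have r0 : (0 <= r)%R by rewrite /r; nra.
have rd : (r < d s)%R by rewrite /r; nra.
pose K' := Bset r (M s) `&` Kd M d.
have constr : forall k, K k -> exists k', K' k' /\ (`|k - k'| <= g / 2)%R.
  move=> k Kk.
  have [m Mm hm] : exists2 m, M s m & (`|k - m| < d s + 1)%R.
    by apply: distp_lt; apply: le_lt_trans (Kd_K s k Kk) _; rewrite lte_fin; lra.
  have [k2 Kk2 hk2] : exists2 k2, K k2 & (`|m - k2| < c s)%R.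
    apply: distp_lt; apply: le_lt_trans (ec s); apply: ereal_sup_ubound; by exists m.
  exists (tt%:num *: k2 + (1 - tt%:num) *: k)%R; split; first split.
  - rewrite /Bset /= /r -ttE; apply: distp_conv.
    + exact: (hM s).2.2.1.
    + apply: le_trans (distp_le k2 Mm) _; rewrite lee_fin distrC; exact: ltW.
    + exact: Kd_K.
  - move=> j _; rewrite /Bset /=.
    have := distp_conv tt (hM j).2.2.1 (Kd_K j k2 Kk2) (Kd_K j k Kk).
    by rewrite ttE (_ : (t * d j + (1 - t) * d j = d j)%R) //; ring.
  - rewrite ttE (_ : (k - (t *: k2 + (1 - t) *: k) = t *: (k - k2))%R); last first.
      by rewrite scalerBl scale1r scalerBr opprD opprB addrA addrC addrA subrK addrC.
    rewrite normrZ ger0_norm; last exact: ltW.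
    rewrite -tB; apply: ler_wpM2l; first exact: ltW.
    rewrite (_ : (k - k2 = (k - m) + (m - k2))%R); last by rewrite addrA subrK.
    apply: (le_trans (ler_normD _ _)); rewrite /B; lra.
have K'0 : K' !=set0 by have [k' [? _]] := constr k0 Kk0; exists k'.
have K'cl : in_classCl C K'.
  split => //; split; last exact: hs r r0 K'0.
  by apply: closedI; [exact: Bset_closed | exact: Kd_closed].
have := Kmin K' K'cl.
pose w i := (if i == s then Num.max r (d s - g / 2) else d i)%R.
have sec : forall i x, M i x -> distp x K' <= (d i - g / 2)%:E.
  move=> i x Mx.
  have [k Kk hk] : exists2 k, K k & (`|x - k| < c i)%R.
    apply: distp_lt; apply: le_lt_trans (ec i); apply: ereal_sup_ubound; by exists x.
  have [k' [K'k' hk']] := constr k Kk.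
  apply: le_trans (distp_le x K'k') _; rewrite lee_fin.
  rewrite (_ : (x - k' = (x - k) + (k - k'))%R); last by rewrite addrA subrK.
  apply: (le_trans (ler_normD _ _)); have := gle i; lra.
have hw : forall i, dH K' (M i) <= (w i)%:E.
  move=> i; rewrite /w; case: eqP => [->|_]; apply: dH_leP.
  - move=> k [Bk _]; apply: le_trans Bk _; rewrite lee_fin le_max lexx //.
  - move=> x Mx; apply: le_trans (sec s x Mx) _; rewrite lee_fin le_max lexx orbT //.
  - by move=> k [_ Kdk]; apply: Kdk.
  - move=> x Mx; apply: le_trans (sec i x Mx) _; rewrite lee_fin; lra.
have -> : SM M K = (\sum_(i < n) d i)%:E.
  by rewrite /SM -sumEFin; apply: eq_bigr => i _; rewrite dK.
have : SM M K' <= (\sum_(i < n) w i)%:E.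
  by rewrite /SM -sumEFin; apply: lee_sum => i _; exact: hw.
move=> h1 h2; have := le_trans h2 h1; rewrite lee_fin; apply/negP; rewrite -ltNge.
rewrite [X in (X < _)%R](bigD1 s) //= [X in (_ < X)%R](bigD1 s) //=.
rewrite /w eqxx (eq_bigr d); last by move=> i /negPf ->.
rewrite ltrD2r gt_max rd /=; lra.
Qed.
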